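(* Let $R=\Bbbk[x_1,\ldots,x_n]$ be a standard graded polynomial ring over a field $\Bbbk$, and let $I$ be a monomial ideal of $R$ that has a componentwise linear resolution in all characteristics (i.e. the ideal generated by the same monomials has a componentwise linear resolution over every field). Then $\beta(I)$ does not depend on $\operatorname{char}\Bbbk$.
   Context: $\beta_{i,j}(I)=\dim_\Bbbk\operatorname{Tor}_i^R(\Bbbk,I)_j$ and $\beta(I)$ is the table of all $\beta_{i,j}(I)$; ''$\beta(I)$ does not depend on $\operatorname{char}\Bbbk$'' means that for all $i,j$, $\beta_{i,j}$ of the ideal generated by the same monomials in $\Bbbk[x_1,\ldots,x_n]$ is the same for every field $\Bbbk$. For $t\in\mathbb N$, $I_t$ is the vector space of degree-$t$ elements of $I$ and $(I_t)R$ the ideal it generates. The resolution of an ideal $I$ is $t$-linear if $I=(I_t)R$ and $\beta_{i,j}(I)=0$ for all $i$ and all $j\neq i+t$. $I$ has a componentwise linear resolution if for all $t\in\mathbb N$ the resolution of $(I_t)R$ is $t$-linear. *)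

(* Defs.v *)
(* Graded Betti numbers of monomial ideals, computed as
   Koszul homology: Tor_i^R(k, I)_j = H_i(x_1..x_n ; I)_j. *)
From HB Require Import structures.
From mathcomp Require Import all_boot all_order all_algebra.
Set Implicit Arguments. Unset Strict Implicit. Unset Printing Implicit Defensive.
Import GRing.Theory.

(* A monomial x^a of R = k[x_1..x_n] is its exponent vector a : 'I_n -> nat.
   A monomial ideal is represented by its (field-independent) set of monomials,
   given as a boolean predicate on exponent vectors. *)
Definition monpred (n : nat) := ('I_n -> nat) -> bool.

Definition monideal (n : nat) (G : seq {ffun 'I_n -> nat}) : monpred n :=
  fun a => has (fun g : {ffun 'I_n -> nat} => [forall k, g k <= a k]) G.

(* (I_t)R : the ideal generated by the degree-t monomials of I. *)
Definition deg_part (n : nat) (I : monpred n) (t : nat) : monpred n :=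
  fun a => [exists b : {ffun 'I_n -> 'I_t.+1},
             ((\sum_k (b k : nat)) == t) && I (fun k => (b k : nat))
             && [forall k, (b k : nat) <= a k]].

(* Koszul complex K(x) (x) I in degree j: basis elements e_F (x) x^m with
   F subset of the variables, |F| = i, x^m in I, |F| + deg m = j. *)
Definition kbasis_t (n j : nat) := ({set 'I_n} * {ffun 'I_n -> 'I_j.+1})%type.

Definition kbasis (n : nat) (I : monpred n) (j i : nat) (p : kbasis_t n j) : bool :=
  [&& #|p.1| == i, (\sum_k (p.2 k : nat)) + i == j & I (fun k => (p.2 k : nat))].

(* Matrix of the Koszul differential d_i : (K_i (x) I)_j -> (K_{i-1} (x) I)_j,
   d(e_F (x) x^m) = sum_{k in F} (-1)^{#{l in F, l < k}} e_{F\k} (x) x_k x^m,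
   written in the row-vector convention on the whole finite type kbasis_t
   (entries vanish outside the basis elements). *)
Definition kdiff (K : fieldType) (n : nat) (I : monpred n) (j i : nat)
  : 'M[K]_#|{: kbasis_t n j}| :=
  \matrix_(r < #|{: kbasis_t n j}|, c < #|{: kbasis_t n j}|)
    let p : kbasis_t n j := enum_val r in let q : kbasis_t n j := enum_val c in
    if @kbasis n I j i p && @kbasis n I j i.-1 q then
      match [pick k in p.1 | (q.1 == p.1 :\ k) &&
                [forall l, (q.2 l : nat) == p.2 l + (l == k)]] with
      | Some k => ((-1) ^+ #|[set l in p.1 | (l < k)%N]|)%R
      | None => 0%R
      end
    else 0%R.

(* beta_{i,j}(I) over K = dim H_i(K(x) (x) I)_j
   = dim C_i - rank d_i - rank d_{i+1}. *)
Definition betti (K : fieldType) (n : nat) (I : monpred n) (i j : nat) : nat :=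
  #|[set p | @kbasis n I j i p]| - \rank (@kdiff K n I j i) - \rank (@kdiff K n I j i.+1).

Definition t_linear (K : fieldType) (n : nat) (J : monpred n) (t : nat) : Prop :=
  (forall a, J a = deg_part J t a) /\
  (forall i j, j != i + t -> betti K J i j = 0).

Definition componentwise_linear (K : fieldType) (n : nat) (I : monpred n) : Prop :=
  forall t, t_linear K (deg_part I t) t.

(* Main.v *)
Require Import Defs.
From mathcomp Require Import all_boot all_order all_algebra.
From mathcomp Require Import zify.
Set Implicit Arguments. Unset Strict Implicit. Unset Printing Implicit Defensive.
Import GRing.Theory.

Definition upclosed n (I : monpred n) :=
  forall a b : 'I_n -> nat, (forall k, a k <= b k) -> I a -> I b.

Lemma monideal_up n (G : seq {ffun 'I_n -> nat}) : upclosed (monideal G).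
Proof.
move=> a b ab /hasP[g gG /forallP ga]; apply/hasP; exists g => //.
by apply/forallP => k; apply: leq_trans (ga k) (ab k).
Qed.

Lemma deg_part_up n (I : monpred n) t : upclosed (deg_part I t).
Proof.
move=> a b ab /existsP[c /andP[/andP[c1 c2] /forallP c3]]; apply/existsP; exists c.
by rewrite c1 c2 /=; apply/forallP => k; apply: leq_trans (c3 k) (ab k).
Qed.

Lemma deg_part_intro n (I : monpred n) t (a : 'I_n -> nat) :
  upclosed I -> \sum_k a k = t -> I a -> deg_part I t a.
Proof.
move=> up sa Ia.
have le : forall k, a k <= t by move=> k; rewrite -sa (bigD1 k) //=; lia.
pose b : {ffun 'I_n -> 'I_t.+1} := [ffun k => inord (a k)].
have E : forall k, (b k : nat) = a k by move=> k; rewrite ffunE inordK // ltnS.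
apply/existsP; exists b.
apply/andP; split; [apply/andP; split|].
- by apply/eqP; rewrite -[X in _ = X]sa; apply: eq_bigr => k _; rewrite E.
- by apply: (up a (fun k => (b k : nat)) _ Ia) => k; rewrite E.
- by apply/forallP => k; rewrite E.
Qed.

Lemma deg_part_elim n (I : monpred n) t (a : 'I_n -> nat) :
  upclosed I -> deg_part I t a -> I a.
Proof.
move=> up /existsP[c /andP[/andP[_ c2] /forallP c3]].
by apply: up c2 => k; apply: c3.
Qed.

Local Open Scope ring_scope.

Lemma rank_complex (K : fieldType) N (P : pred 'I_N) (A B : 'M[K]_N) :
  (forall r c, ~~ P c -> A r c = 0) -> (forall r c, ~~ P r -> B r c = 0) ->
  A *m B = 0 -> (\rank A + \rank B <= #|P|)%N.
Proof.
move=> A0 B0 AB.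
pose D : 'M[K]_(#|P|, N) := \matrix_(i, c) ((c == enum_val i)%:R).
have QE : forall r c, (D^T *m D) r c = ((P c) && (r == c))%:R.
  move=> r c; rewrite !mxE.
  under eq_bigr do rewrite !mxE.
  rewrite -(big_enum_val (A := P) (fun x => ((r == x)%:R * (c == x)%:R : K))) /=.
  have [Pc|nPc] := boolP (P c).
    rewrite (bigD1 c) //= big1 => [|k /andP[_ /negbTE kc]]; last by rewrite (eq_sym c) kc mulr0.
    by rewrite eqxx mulr1 addr0 /= eq_sym.
  rewrite big1 => [|k Pk]; first by move: nPc; rewrite /in_mem /=; case: (P c).
  case: (c =P k) => [ck|_]; last by rewrite mulr0.
  by move: nPc Pk; rewrite ck /in_mem /= => /negbTE ->.
have AQ : A *m (D^T *m D) = A.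
  apply/matrixP=> r c; rewrite !mxE.
  under eq_bigr do rewrite QE.
  rewrite (bigD1 c) //= big1 => [|k /negbTE kc]; last by rewrite kc andbF mulr0.
  rewrite eqxx andbT addr0; have [Pc|nPc] := boolP (P c); first by rewrite mulr1.
  by rewrite mulr0 A0.
have QB : (D^T *m D) *m B = B.
  apply/matrixP=> r c; rewrite !mxE.
  under eq_bigr do rewrite QE.
  rewrite (bigD1 r) //= big1 => [|k /negbTE kc]; last by rewrite eq_sym kc andbF mul0r.
  rewrite eqxx andbT addr0; have [Pc|nPc] := boolP (P r); first by rewrite mul1r.
  by rewrite mul0r B0.
have rB : (\rank B <= \rank (D *m B))%N.
  by rewrite -{1}QB -mulmxA mxrankM_maxr.
have rA : (\rank A <= \rank (D :&: kermx B)%MS)%N.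
  apply: mxrankS; rewrite sub_capmx sub_kermx AB eqxx andbT.
  by rewrite -AQ mulmxA submxMl.
have := mxrank_mul_ker D B; have := rank_leq_row D; lia.
Qed.

Definition krel n j (p q : kbasis_t n j) (a : 'I_n) : bool :=
  (q.1 == p.1 :\ a) && [forall l, (q.2 l : nat) == (p.2 l + (l == a))%N].
Definition ksg (K : fieldType) n (S : {set 'I_n}) (a : 'I_n) : K :=
  (-1) ^+ #|[set l in S | (l < a)%N]|.
Definition kent (K : fieldType) n (I : monpred n) j i (p q : kbasis_t n j) : K :=
  (@kbasis n I j i p && @kbasis n I j i.-1 q)%:R *
    \sum_(a in p.1) (krel p q a)%:R * ksg K p.1 a.

Lemma krel_uniq n j (p q : kbasis_t n j) a b : krel p q a -> krel p q b -> a = b.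
Proof.
move=> /andP[_ /forallP ra] /andP[_ /forallP rb].
move: (ra a) (rb a); rewrite eqxx; move/eqP => ->; move/eqP.
by case: eqP => // _; lia.
Qed.

Lemma kdiffE (K : fieldType) n (I : monpred n) j i r c :
  kdiff K I j i r c = @kent K n I j i (enum_val r) (enum_val c).
Proof.
rewrite mxE /kent /ksg.
set p := enum_val r; set q := enum_val c.
case: ifP => _; last by rewrite mul0r.
rewrite mul1r; case: pickP => [k /andP[kp rk] | none].
  rewrite (bigD1 k) //=; rewrite /krel rk mul1r big1 ?addr0 // => a /andP[ap ak].
  case ra: (krel p q a); last by rewrite /krel in ra; rewrite ra mul0r.
  by rewrite (krel_uniq ra rk) eqxx in ak.
rewrite big1 // => a ap; move: (none a); rewrite ap /=.
by rewrite /krel => ->; rewrite mul0r.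
Qed.

Lemma kbasis_deg_part n (I : monpred n) j i (p : kbasis_t n j) :
  upclosed I -> @kbasis n (deg_part I (j - i)) j i p = @kbasis n I j i p.
Proof.
move=> up; rewrite /kbasis; case: (#|p.1| == i) => //=.
case s: (_ + i == j)%N => //=; apply/idP/idP; first exact: deg_part_elim.
move=> Ip; apply: deg_part_intro up _ Ip; move: (eqP s); move: (\sum_(k < n) (p.2 k : nat))%N => S H; lia.
Qed.

Lemma kdiff_deg_part (K : fieldType) n (I : monpred n) j i :
  upclosed I -> kdiff K I j i = kdiff K (deg_part I (j - i)) j i.
Proof.
move=> up; apply/matrixP => r c; rewrite !kdiffE /kent.
set p := enum_val r; set q := enum_val c.
rewrite kbasis_deg_part //.
case kp: (@kbasis n I j i p); last by rewrite /= !mul0r.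
case: (boolP [exists a in p.1, krel p q a]) => [/existsP[a /andP[ap ra]]|nex]; last first.
  rewrite !big1 ?mulr0 // => a ap; case ra: (krel p q a); rewrite ?mul0r //.
  by move/existsP: nex; case; exists a; rewrite ap ra.
move: ra => /andP[_ /forallP ra].
have ge : forall l, (p.2 l <= q.2 l)%N by move=> l; rewrite (eqP (ra l)) leq_addr.
move: kp; rewrite /kbasis => /and3P[_ /eqP s Ip].
have IQ : I (fun k => (q.2 k : nat)) by apply: (up (fun k => (p.2 k : nat))).
have JQ : deg_part I (j - i) (fun k => (q.2 k : nat)).
  apply: (deg_part_up (a := fun k => (p.2 k : nat))) => //.
  apply: deg_part_intro => //; move: s; move: (\sum_(k < n) (p.2 k : nat))%N => S H; lia.
by rewrite IQ JQ.
Qed.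

Lemma kdiff_lt (K : fieldType) n (I : monpred n) j i :
  (j < i)%N -> kdiff K I j i = 0.
Proof.
move=> ji; apply/matrixP => r c; rewrite kdiffE /kent mxE.
rewrite /kbasis; case: (#|_| == i) => //=; last by rewrite mul0r.
have -> : ((\sum_(k < n) ((enum_val r).2 k : nat) + i)%N == j) = false by apply/negbTE; move: (\sum_(k < n) ((enum_val r).2 k : nat))%N => S; lia.
by rewrite mul0r.
Qed.

Definition rel2 n j (p q : kbasis_t n j) (a b : 'I_n) : bool :=
  (q.1 == p.1 :\ a :\ b) && [forall l, (q.2 l : nat) == (p.2 l + (l == a) + (l == b))%N].

Lemma krel_comp n j (p x q : kbasis_t n j) a b :
  krel p x a -> krel x q b -> rel2 p q a b.
Proof.
move=> /andP[/eqP x1 /forallP x2] /andP[/eqP q1 /forallP q2].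
apply/andP; split; first by rewrite q1 x1.
by apply/forallP => l; rewrite (eqP (q2 l)) (eqP (x2 l)).
Qed.

Lemma krel_inj n j (p x y : kbasis_t n j) a : krel p x a -> krel p y a -> x = y.
Proof.
move: x y => [x1 x2] [y1 y2] /andP[/eqP /= ex1 /forallP /= ex2] /andP[/eqP /= ey1 /forallP /= ey2].
congr pair; first by rewrite ex1 ey1.
apply/ffunP => l; apply/val_inj; by rewrite /= (eqP (ex2 l)) (eqP (ey2 l)).
Qed.

Lemma rel2C n j (p q : kbasis_t n j) a b : rel2 p q a b = rel2 p q b a.
Proof.
rewrite /rel2 setDDl setUC -setDDl; congr andb.
by apply: eq_forallb => l; rewrite addnAC.
Qed.

Lemma krel_count (K : fieldType) n j (p q : kbasis_t n j) a b :
  \sum_(x : kbasis_t n j) ((krel p x a && krel x q b)%:R : K) = (rel2 p q a b)%:R.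
Proof.
case: (boolP (rel2 p q a b)) => h; last first.
  rewrite big1 // => x _; case: (boolP (krel p x a && krel x q b)) => // /andP[h1 h2].
  by rewrite (krel_comp h1 h2) in h.
move: (h) => /andP[_ /forallP hq].
have bnd : forall l, (p.2 l + (l == a) < j.+1)%N.
  by move=> l; have := ltn_ord (q.2 l); rewrite (eqP (hq l)); lia.
pose x0 : kbasis_t n j := (p.1 :\ a, [ffun l => Ordinal (bnd l)]).
have r1 : krel p x0 a by apply/andP; split => //; apply/forallP => l; rewrite ffunE.
have r2 : krel x0 q b.
  move: h => /andP[/eqP q1 _]; apply/andP; split; first by rewrite q1.
  by apply/forallP => l; rewrite ffunE /= (eqP (hq l)).
rewrite (bigD1 x0) // r1 r2 /= big1 ?addr0 // => x xn.
case: (boolP (krel p x a && krel x q b)) => // /andP[h1 _].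
by move: xn; rewrite (krel_inj h1 r1) eqxx.
Qed.

Lemma kb_step n (I : monpred n) j i (p x : kbasis_t n j) a :
  upclosed I -> @kbasis n I j i.+1 p -> a \in p.1 -> krel p x a -> @kbasis n I j i x.
Proof.
move=> up /and3P[/eqP c1 /eqP s1 Ip] ap /andP[/eqP x1 /forallP x2].
apply/and3P; split.
- apply/eqP; rewrite x1; move: c1; rewrite (cardsD1 a p.1) ap add1n; by case.
- apply/eqP; rewrite (eq_bigr (fun k => p.2 k + (k == a))%N) => [|k _]; last exact/eqP.
  have h1 : (\sum_(k < n) (k == a) = 1)%N.
    by rewrite (bigD1 a) //= eqxx big1 // => k /negbTE ->.
  by rewrite big_split /= h1; apply: etrans s1; rewrite -addnA add1n.
- by apply: (up (fun k => (p.2 k : nat)) _ _ Ip) => k; rewrite (eqP (x2 k)) leq_addr.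
Qed.

Lemma card_lt_D1 n (P : {set 'I_n}) (a b : 'I_n) :
  a \in P -> (a < b)%N ->
  #|[set l in P | (l < b)%N]| = #|[set l in P :\ a | (l < b)%N]|.+1.
Proof.
move=> aP ab; rewrite (cardsD1 a) !inE aP ab /= add1n; congr S.
by apply: eq_card => l; rewrite !inE; case: (l == a).
Qed.

Lemma card_lt_D1' n (P : {set 'I_n}) (a b : 'I_n) :
  (a < b)%N -> [set l in P :\ b | (l < a)%N] = [set l in P | (l < a)%N].
Proof.
move=> ab; apply/setP => l; rewrite !inE.
case: (boolP (l < a)%N) => la; rewrite ?andbF //.
have -> : (l != b) by apply/eqP => lb; rewrite lb in la; lia.
by [].
Qed.

Local Open Scope ring_scope.

Lemma ksg_swap_lt (K : fieldType) n (P : {set 'I_n}) (a b : 'I_n) :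
  a \in P -> (a < b)%N ->
  ksg K P a * ksg K (P :\ a) b = - (ksg K P b * ksg K (P :\ b) a).
Proof.
move=> aP ab; rewrite /ksg (card_lt_D1' P ab) (card_lt_D1 aP ab) exprS.
by rewrite mulN1r mulNr opprK mulrC.
Qed.

Lemma ksg_swap (K : fieldType) n (P : {set 'I_n}) (a b : 'I_n) :
  a \in P -> b \in P -> a != b ->
  ksg K P a * ksg K (P :\ a) b = - (ksg K P b * ksg K (P :\ b) a).
Proof.
move=> aP bP; rewrite neq_ltn => /orP[ab|ba]; first exact: ksg_swap_lt.
by rewrite (ksg_swap_lt K bP ba) opprK.
Qed.

Lemma antisym_sum (K : fieldType) n (F : 'I_n -> 'I_n -> K) :
  (forall a, F a a = 0) -> (forall a b, F a b = - F b a) ->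
  \sum_a \sum_b F a b = 0.
Proof.
move=> F0 FN.
have E : forall a b, F a b = ((a < b)%N%:R * F a b) + ((b < a)%N%:R * F a b).
  move=> a b; case: (ltngtP a b) => [ab|ba|ab]; rewrite ?mul0r ?mul1r ?addr0 ?add0r //.
  by move/val_inj: ab => ->; rewrite F0.
under eq_bigr do under eq_bigr do rewrite E.
under eq_bigr do rewrite big_split /=.
rewrite big_split /= [X in _ + X]exchange_big /=.
rewrite -big_split /= big1 // => a _; rewrite -big_split /= big1 // => b _.
by rewrite [F b a]FN mulrN addrN.
Qed.

Lemma kdiff_sq (K : fieldType) n (I : monpred n) j i :
  upclosed I -> kdiff K I j i.+1 *m kdiff K I j i = 0.
Proof.
move=> up; apply/matrixP => r c; rewrite !mxE.
under eq_bigr do rewrite !kdiffE.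
set p := enum_val r; set q := enum_val c.
rewrite -(big_enum_val (fun x => @kent K n I j i.+1 p x * @kent K n I j i x q)) /=.
rewrite /kent /=.
case kbp: (@kbasis n I j i.+1 p); last by rewrite big1 // => x _; rewrite /= !mul0r.
case kbq: (@kbasis n I j i.-1 q); last by rewrite big1 // => x _; rewrite andbF !mul0r mulr0.
set P := p.1.
pose S1 (x : kbasis_t n j) := \sum_(a in P) (krel p x a)%:R * ksg K P a.
pose S2 (x : kbasis_t n j) := \sum_(b in x.1) (krel x q b)%:R * ksg K x.1 b.
pose G a b : K := ksg K P a * ksg K (P :\ a) b.
have step1 : forall x, (true && @kbasis n I j i x)%:R * S1 x * ((@kbasis n I j i x && true)%:R * S2 x) = S1 x * S2 x.
  move=> x; rewrite andbT /=; case kbx: (@kbasis n I j i x); first by rewrite !mulr1n !mul1r.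
  suff -> : S1 x = 0 by rewrite !mulr0n !mul0r ?mulr0 ?mul0r.
  apply: big1 => a aP.
  case ra: (krel p x a); last by rewrite mul0r.
  by rewrite (kb_step up kbp aP ra) in kbx.
under eq_bigr do rewrite step1.
have step2 : forall x, S1 x * S2 x =
    \sum_(a in P) \sum_(b in P :\ a) (krel p x a && krel x q b)%:R * G a b.
  move=> x; rewrite /S1 mulr_suml; apply: eq_bigr => a aP.
  case ra: (krel p x a); last by rewrite /= mulr0n !mul0r big1 // => b _; rewrite /= ?mulr0n mul0r.
  move: (ra) => /andP[/eqP x1 _]; rewrite /S2 x1 mulr_sumr; apply: eq_bigr => b _.
  by rewrite /= mulr1n mul1r mulrCA.
under eq_bigr do rewrite step2.
rewrite exchange_big /=.
under eq_bigr do rewrite exchange_big /=.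
have step3 : forall a b, \sum_(x : kbasis_t n j) (krel p x a && krel x q b)%:R * G a b
    = (rel2 p q a b)%:R * G a b.
  by move=> a b; rewrite -mulr_suml krel_count.
under eq_bigr do under eq_bigr do rewrite step3.
pose F a b : K := if (a \in P) && (b \in P :\ a) then (rel2 p q a b)%:R * G a b else 0.
transitivity (\sum_a \sum_b F a b).
  rewrite big_mkcond; apply: eq_bigr => a _; case: ifP => aP.
    by rewrite big_mkcond; apply: eq_bigr => b _; rewrite /F aP.
  by rewrite big1 // => b _; rewrite /F aP.
apply: antisym_sum => [a|a b]; first by rewrite /F setD11 andbF.
have [->|ab] := eqVneq a b; first by rewrite /F setD11 andbF oppr0.
rewrite /F !in_setD1.
rewrite eq_sym ab /=.
case: (boolP (a \in P)) => aP; case: (boolP (b \in P)) => bP; rewrite /= ?oppr0 //.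
by rewrite /G (ksg_swap K aP bP ab) rel2C mulrN.
Qed.

Lemma kdiff0 (K : fieldType) n (I : monpred n) j : kdiff K I j 0 = 0.
Proof.
apply/matrixP => r c; rewrite kdiffE /kent mxE.
case kb: (@kbasis n I j 0 (enum_val r)); last by rewrite /= mul0r.
move: kb => /and3P[/eqP c0 _ _]; move/eqP: c0; rewrite cards_eq0 => /eqP ->.
by rewrite big_set0 mulr0.
Qed.

Lemma card_kb n (I : monpred n) j (k : nat) :
  #|[pred m : 'I_#|{: kbasis_t n j}| | @kbasis n I j k (enum_val m)]| =
  #|[set p | @kbasis n I j k p]|.
Proof.
rewrite (@eq_card _ _ (enum_val @^-1: [set p | @kbasis n I j k p])); last by move=> m; rewrite !inE.
by rewrite -(can2_imset_pre _ enum_rankK enum_valK) card_imset //; exact: enum_rank_inj.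
Qed.

Lemma rank_bound (K : fieldType) n (I : monpred n) j k :
  upclosed I -> (\rank (kdiff K I j k.+1) + \rank (kdiff K I j k) <= #|[set p | @kbasis n I j k p]|)%N.
Proof.
move=> up; rewrite -card_kb; apply: rank_complex; last exact: kdiff_sq.
- move=> r c; rewrite /= kdiffE /kent => /negbTE ->; by rewrite andbF mul0r.
- move=> r c; rewrite /= kdiffE /kent => /negbTE ->; by rewrite mul0r.
Qed.

Fixpoint altsum (c : nat -> nat) (m : nat) : nat :=
  match m with 0 => 0 | k.+1 => c k - altsum c k end.

Lemma rank_rec (K : fieldType) n (I : monpred n) j m :
  upclosed I -> (forall k, (k < m)%N -> betti K I k j = 0) ->
  \rank (kdiff K I j m) = altsum (fun k => #|[set p | @kbasis n I j k p]|) m.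
Proof.
move=> up; elim: m => [|m IH] H; first by rewrite kdiff0 mxrank0.
have := H m (ltnSn m); rewrite /betti => b0.
have := rank_bound K j m up.
rewrite /= -IH => [|k km]; last by apply: H; apply: ltnW.
move: b0; set C := #|[set p | @kbasis n I j m p]|; set A := \rank (kdiff K I j m.+1); set B := \rank (kdiff K I j m); clearbody A B C; lia.
Qed.

Lemma rank_indep (K1 K2 : fieldType) n (G : seq {ffun 'I_n -> nat}) j i :
  (forall K : fieldType, componentwise_linear K (monideal G)) ->
  \rank (kdiff K1 (monideal G) j i) = \rank (kdiff K2 (monideal G) j i).
Proof.
move=> H; case: (ltnP j i) => ji; first by rewrite !kdiff_lt // !mxrank0.
rewrite (kdiff_deg_part K1 j i (@monideal_up n G)) (kdiff_deg_part K2 j i (@monideal_up n G)).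
have L : forall K : fieldType, forall k, (k < i)%N -> betti K (deg_part (monideal G) (j - i)%N) k j = 0.
  move=> K k ki; have [_ HL] := H K (j - i)%N; apply: HL; apply/eqP; lia.
rewrite (rank_rec (@deg_part_up n _ _) (L K1)) (rank_rec (@deg_part_up n _ _) (L K2)).
by [].
Qed.

Theorem theorem5p1 (n : nat) (G : seq {ffun 'I_n -> nat}) :
  (forall K : fieldType, componentwise_linear K (monideal G)) ->
  forall (K1 K2 : fieldType) (i j : nat),
    betti K1 (monideal G) i j = betti K2 (monideal G) i j.
Proof.
move=> H K1 K2 i j; rewrite /betti.
by rewrite (rank_indep K1 K2 j i H) (rank_indep K1 K2 j i.+1 H).
Qed.
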